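(* Let $\langle S, \preceq\rangle$ be a partially ordered set and let $\mathcal{G}$ be a group acting on $S$. For $a \in S$ write $[a] = \{Ta : T \in \mathcal{G}\}$ and let $S/\mathcal{G}$ be the set of these equivalence classes. Define the strong induced relation on $S/\mathcal{G}$ by: $A \preceq_{\mathcal{G},s} B$ iff for all $a \in A$ there exists $b \in B$ with $a \preceq b$; and the weak induced relation by: $A \preceq_{\mathcal{G},w} B$ iff there exist $a \in A$ and $b \in B$ with $a \preceq b$. Then: (1) the strong relation $\preceq_{\mathcal{G},s}$ is a preorder on $S/\mathcal{G}$; (2) if $\mathcal{G}$ is increasing on $S$ (i.e. for all $T \in \mathcal{G}$ and $a,b \in S$, $a \preceq b$ implies $Ta \preceq Tb$), then the strong and weak relations coincide; (3) if $\mathcal{G}$ acts transversely on $S$ (i.e. for all $T \in \mathcal{G}$ and $a \in S$, $Ta \preceq a$ implies $Ta = a$), then the strong relation $\preceq_{\mathcal{G},s}$ is a partial order on $S/\mathcal{G}$. *)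

(* Defs.v *)
Set Implicit Arguments.

Record group := Group {
  gcar :> Type;
  gmul : gcar -> gcar -> gcar;
  gone : gcar;
  ginv : gcar -> gcar;
  gmulA : forall x y z, gmul x (gmul y z) = gmul (gmul x y) z;
  gmul1 : forall x, gmul gone x = x;
  gmulV : forall x, gmul (ginv x) x = gone
}.

Definition is_action (G : group) (S : Type) (act : G -> S -> S) : Prop :=
  (forall x, act (gone G) x = x) /\
  (forall g h x, act (gmul G g h) x = act g (act h x)).

Definition is_preorder (X : Type) (R : X -> X -> Prop) : Prop :=
  (forall x, R x x) /\ (forall x y z, R x y -> R y z -> R x z).

Definition is_partial_order (X : Type) (R : X -> X -> Prop) : Prop :=
  is_preorder R /\ (forall x y, R x y -> R y x -> x = y).

Definition orbit (G : group) (S : Type) (act : G -> S -> S) (a : S) : S -> Prop :=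
  fun x => exists T : G, x = act T a.

Definition orbits (G : group) (S : Type) (act : G -> S -> S) : Type :=
  { A : S -> Prop | exists a, A = @orbit G S act a }.

Definition strong_rel (G : group) (S : Type) (le : S -> S -> Prop)
  (act : G -> S -> S) (A B : @orbits G S act) : Prop :=
  forall a, proj1_sig A a -> exists b, proj1_sig B b /\ le a b.

Definition weak_rel (G : group) (S : Type) (le : S -> S -> Prop)
  (act : G -> S -> S) (A B : @orbits G S act) : Prop :=
  exists a b, proj1_sig A a /\ proj1_sig B b /\ le a b.

Definition increasing (G : group) (S : Type) (le : S -> S -> Prop)
  (act : G -> S -> S) : Prop :=
  forall (T : G) a b, le a b -> le (act T a) (act T b).

Definition transverse (G : group) (S : Type) (le : S -> S -> Prop)
  (act : G -> S -> S) : Prop :=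
  forall (T : G) a, le (act T a) a -> act T a = a.

(* Main.v *)
Require Import Defs.
From Stdlib Require Import FunctionalExtensionality PropExtensionality ProofIrrelevance.

Lemma act_inv (G : group) (S : Type) (act : G -> S -> S) (Hact : @is_action G S act)
  (T : G) x : act (ginv G T) (act T x) = x.
Proof. destruct Hact as [H1 H2]. rewrite <- H2, gmulV. apply H1. Qed.

Lemma orbit_mem (G : group) (S : Type) (act : G -> S -> S) (Hact : @is_action G S act)
  a b : @orbit G S act a b -> @orbit G S act b = @orbit G S act a.
Proof.
  intros [T HT]. subst b. destruct Hact as [H1 H2].
  apply functional_extensionality; intro x; apply propositional_extensionality.
  unfold orbit; split.
  - intros [U ->]. exists (gmul G U T). now rewrite H2.
  - intros [U ->]. exists (gmul G U (ginv G T)). rewrite H2.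
    now rewrite (@act_inv G S act (conj H1 H2)).
Qed.

Theorem theorem1 (G : group) (S : Type) (le : S -> S -> Prop)
  (act : G -> S -> S) (Hle : @is_partial_order S le)
  (Hact : @is_action G S act) :
  @is_preorder (@orbits G S act) (@strong_rel G S le act) /\
  (@increasing G S le act ->
     forall A B : @orbits G S act,
       @strong_rel G S le act A B <-> @weak_rel G S le act A B) /\
  (@transverse G S le act ->
     @is_partial_order (@orbits G S act) (@strong_rel G S le act)).
Proof.
  destruct Hle as [[Hrefl Htrans] Hanti].
  assert (Hpre : @is_preorder (@orbits G S act) (@strong_rel G S le act)).
  { split.
    - intros A a Ha. exists a. auto.
    - intros A B C HAB HBC a Ha. destruct (HAB a Ha) as [b [Hb Hab]].
      destruct (HBC b Hb) as [c [Hc Hbc]]. exists c. split; eauto. }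
  split; [exact Hpre|split].
  - intros Hinc A B. split.
    + intros H. destruct A as [A [a0 HA]]. simpl in *.
      assert (Ha0 : A a0) by (subst A; exists (gone G); symmetry; apply (proj1 Hact)).
      destruct (H a0 Ha0) as [b [Hb Hab]]. exists a0, b. simpl. auto.
    + intros [a [b [Ha [Hb Hab]]]] a' Ha'.
      destruct A as [A [a0 HA]]. simpl in *. subst A.
      destruct Ha as [U ->]. destruct Ha' as [T ->].
      exists (act (gmul G T (ginv G U)) b). split.
      * destruct B as [B [b0 HB]]. simpl in *. subst B.
        destruct Hb as [V ->]. exists (gmul G (gmul G T (ginv G U)) V).
        rewrite !(proj2 Hact). reflexivity.
      * assert (E : act T a0 = act (gmul G T (ginv G U)) (act U a0)).
        { rewrite (proj2 Hact), (@act_inv G S act Hact). reflexivity. }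
        rewrite E. apply Hinc. exact Hab.
  - intros Htr. split; [exact Hpre|].
    intros [A pA] [B pB] HAB HBA. unfold strong_rel in *; simpl in *.
    pose proof pA as [a0 HA]. pose proof pB as [b0 HB].
    assert (Ha0 : A a0) by (subst A; exists (gone G); symmetry; apply (proj1 Hact)).
    destruct (HAB a0 Ha0) as [b [Hb Hab]].
    destruct (HBA b Hb) as [a' [Ha' Hba]].
    assert (Ha'' := Ha'). rewrite HA in Ha''. destruct Ha'' as [T ->].
    assert (Hle1 : le a0 (act T a0)) by eauto.
    assert (E : act (ginv G T) (act T a0) = act T a0).
    { apply Htr. rewrite (@act_inv G S act Hact). exact Hle1. }
    rewrite (@act_inv G S act Hact) in E.
    assert (Eb : b = a0).
    { apply Hanti; [ rewrite <- E in Hba; exact Hba | exact Hab ]. }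
    subst b.
    assert (AB : A = B).
    { rewrite HA, HB. rewrite HB in Hb. apply (@orbit_mem G S act Hact). exact Hb. }
    clear HA. subst A. assert (pA = pB) by apply proof_irrelevance. subst pB. reflexivity.
Qed.
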